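(* Let $G$ be a finite group. Then the co-prime graph $\Gamma_{CP}(G)$ is minimally connected if and only if $G$ is a $p$-group for some prime $p$.
   Context: The co-prime graph $\Gamma_{CP}(G)$ of a finite group $G$ is the simple undirected graph with vertex set $G$ in which two distinct elements $x,y$ are adjacent if and only if $\gcd(o(x),o(y))=1$. A $p$-group is a group of order $p^n$ for a prime $p$. For a connected graph $\Gamma$, a vertex cut-set is a set $S$ of vertices such that $\Gamma-S$ is disconnected or has just one vertex, and the vertex connectivity $\kappa(\Gamma)$ is the smallest size of a vertex cut-set. $\Gamma$ is minimally connected if $\kappa(\Gamma-\epsilon)=\kappa(\Gamma)-1$ for every edge $\epsilon$ of $\Gamma$. *)

(* Defs.v *)
From mathcomp Require Import all_boot all_order all_fingroup all_solvable.
Set Implicit Arguments. Unset Strict Implicit. Unset Printing Implicit Defensive.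

(* A simple graph: vertex set V : {set T} over a finType T, adjacency E : rel T
   (assumed symmetric and irreflexive on V; only pairs inside V matter). *)

Definition connected_in (T : finType) (E : rel T) (W : {set T}) (x y : T) :=
  connect [rel u v | [&& u \in W, v \in W & E u v]] x y.

Definition disconnected_on (T : finType) (E : rel T) (W : {set T}) :=
  [exists x in W, exists y in W, ~~ connected_in E W x y].

Definition is_connected_graph (T : finType) (V : {set T}) (E : rel T) :=
  [forall x in V, forall y in V, connected_in E V x y].

Definition vertex_cut (T : finType) (V : {set T}) (E : rel T) (S : {set T}) :=
  (S \subset V) && (disconnected_on E (V :\: S) || (#|V :\: S| == 1)).

(* vertex connectivity: smallest size of a vertex cut-set
   (default #|V| only matters for the empty graph, which has no cut-set) *)
Definition kappa (T : finType) (V : {set T}) (E : rel T) : nat :=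
  \big[minn/#|V|]_(S : {set T} | vertex_cut V E S) #|S|.

Definition del_edge (T : finType) (E : rel T) (a b : T) : rel T :=
  [rel x y | E x y && ~~ (((x == a) && (y == b)) || ((x == b) && (y == a)))].

Definition minimally_connected (T : finType) (V : {set T}) (E : rel T) :=
  is_connected_graph V E /\
  forall a b, a \in V -> b \in V -> a != b -> E a b ->
    kappa V (del_edge E a b) = kappa V E - 1.

Definition coprime_rel (gT : finGroupType) : rel gT :=
  [rel x y | (x != y) && coprime #[x]%g #[y]%g].

(* Main.v *)
Require Import Defs.
From mathcomp Require Import all_boot all_order all_fingroup all_solvable.
From mathcomp Require Import zify.
Set Implicit Arguments. Unset Strict Implicit. Unset Printing Implicit Defensive.

Section Graph.
Variables (T : finType) (V : {set T}) (E : rel T).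

Lemma kappa_le S : vertex_cut V E S -> kappa V E <= #|S|.
Proof.
move=> HS; rewrite /kappa -big_filter.
have : S \in [seq i <- index_enum {set T} | vertex_cut V E i].
  by rewrite mem_filter HS mem_index_enum.
elim: [seq _ <- _ | _] => [//|a s IH]; rewrite in_cons big_cons.
case/orP=> [/eqP->|/IH]; first exact: geq_minl.
by apply: leq_trans; exact: geq_minr.
Qed.

Lemma kappa_ge m : m <= #|V| -> (forall S, vertex_cut V E S -> m <= #|S|) ->
  m <= kappa V E.
Proof.
move=> HV HS; rewrite /kappa; elim/big_ind: _ => //.
by move=> a b Ha Hb; rewrite leq_min Ha Hb.
Qed.

Lemma kappa_cases : kappa V E = #|V| \/ exists2 S, vertex_cut V E S & kappa V E = #|S|.
Proof.
rewrite /kappa; elim/big_ind: _ => [|a b Ha Hb|S HS]; [by left| |by right; exists S].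
by rewrite /minn; case: ltnP.
Qed.

Lemma connect_isolated (e : rel T) z y : (forall v, ~~ e z v) -> connect e z y -> y = z.
Proof.
move=> Hz /connectP [[|v p] /= Hp ->] //.
by move: Hp; case/andP=> Hzv; rewrite (negbTE (Hz v)) in Hzv.
Qed.


Definition nb (w : T) := [set h in V | E w h].

Lemma kappa_le_deg w : w \in V -> ~~ E w w -> kappa V E <= #|nb w|.
Proof.
move=> Hw Hww; apply: kappa_le; rewrite /vertex_cut.
have -> : nb w \subset V by apply/subsetP=> h; rewrite inE => /andP[].
set W := V :\: nb w.
have HwW : w \in W by rewrite !inE Hw /= andbT.
case: (eqVneq #|W| 1) => [H1|H1]; first by apply/orP; right; apply/eqP.
apply/orP; left.
have : 0 < #|W :\ w|.
  by rewrite (cardsD1 w) HwW /= in H1; case: #|W :\ w| H1.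
case/card_gt0P=> u; rewrite !inE => /andP[Huw Hu].
apply/existsP; exists w; rewrite HwW /=.
apply/existsP; exists u; rewrite !inE Hu /=.
rewrite /connected_in; set r := [rel _ _ | _].
have Hiso : forall v, ~~ r w v.
  move=> v /=; apply/negP=> /and3P[_ Hv Hwv].
  by move: Hv; rewrite !inE Hwv andbT; case: (v \in V).
apply/negP=> /(connect_isolated Hiso) Heq.
by rewrite Heq eqxx in Huw.
Qed.


Lemma del_cut c z S :
  (forall a b, E a b = E b a) -> ~~ E z z ->
  (forall a, a \in V -> a != c -> E c a) -> c \in V -> c != z ->
  vertex_cut V (del_edge E c z) S -> ~~ vertex_cut V E S -> #|nb z| <= #|S|.+1.
Proof.
move=> Hsym Hirr Huniv Hc Hcz.
rewrite /vertex_cut; case/andP=> HSV Hcut; rewrite HSV /= negb_or => /andP[Hnd Hn1].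
rewrite (negbTE Hn1) orbF in Hcut.
set W := V :\: S in Hcut Hnd Hn1.
suff Hsub : nb z \subset c |: S.
  by apply: leq_trans (subset_leq_card Hsub) _; rewrite cardsU1; case: (c \in S).
apply/subsetP=> h; rewrite inE => /andP[HhV Hzh]; rewrite !inE.
case: (eqVneq h c) => //= Hhc; apply/negPn/negP => HhS.
have HhW : h \in W by rewrite !inE HhS HhV.
have Hhz : h != z by apply/eqP=> Ehz; move: Hzh; rewrite Ehz; exact/negP.
case/existsP: Hcut => a /andP[Ha /existsP[b /andP[Hb Hab]]].
case: (boolP (c \in S)) => HcS.
  have Heq : connected_in (del_edge E c z) W a b = connected_in E W a b.
    rewrite /connected_in; apply: eq_connect => u v /=.
    case: (boolP (u \in W)) => //= Hu; case: (boolP (v \in W)) => //= Hv.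
    have Huc : u != c by apply: contraTneq Hu => ->; rewrite !inE HcS.
    have Hvc : v != c by apply: contraTneq Hv => ->; rewrite !inE HcS.
    by rewrite /del_edge /= (negbTE Huc) (negbTE Hvc) /= andbF andbT.
  apply: (negP Hnd); apply/existsP; exists a; rewrite Ha /=.
  by apply/existsP; exists b; rewrite Hb /= -Heq.
have HcW : c \in W by rewrite !inE HcS Hc.
have Hczb : (c == z) = false by apply/negbTE.
have Hstep : forall u v, u \in W -> v \in W -> E u v -> u != c -> v != c ->
    connected_in (del_edge E c z) W u v.
  move=> u v Hu Hv Huv Huc Hvc; apply: connect1; rewrite /del_edge /= Hu Hv Huv /=.
  by rewrite (negbTE Huc) (negbTE Hvc) /= andbF.
have Hcto : forall u, u \in W -> u != z -> u != c ->
    connected_in (del_edge E c z) W c u /\ connected_in (del_edge E c z) W u c.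
  move=> u Hu Huz Huc; have HuV : u \in V by move: Hu; rewrite !inE => /andP[].
  split; apply: connect1; rewrite /del_edge /= HcW Hu /= ?eqxx /=.
    by rewrite Huniv // (negbTE Huz) Hczb.
  by rewrite Hsym Huniv // (negbTE Huz) (negbTE Huc).
have Hall : forall u, u \in W ->
    connected_in (del_edge E c z) W c u /\ connected_in (del_edge E c z) W u c.
  move=> u Hu; case: (eqVneq u c) => [->|Huc]; first by split; exact: connect0.
  case: (eqVneq u z) => [Huz|Huz]; last exact: Hcto.
  have [H1 H2] := Hcto h HhW Hhz Hhc.
  subst u; split.
    apply: connect_trans H1 _; apply: Hstep => //; first by rewrite Hsym.
  apply: (connect_trans _ H2); exact: Hstep.
apply: (negP Hab); have [_ Ha'] := Hall a Ha; have [Hb' _] := Hall b Hb.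
exact: connect_trans Ha' Hb'.
Qed.

Lemma kappa_ge1 : is_connected_graph V E -> 1 < #|V| -> 1 <= kappa V E.
Proof.
move=> Hc HV; apply: kappa_ge; first exact: ltnW.
move=> S /andP[_ HS]; case: (posnP #|S|) => // /eqP; rewrite cards_eq0 => /eqP HS0.
move: HS; rewrite HS0 setD0 eq_sym (ltn_eqF HV) orbF.
case/existsP=> a /andP[Ha /existsP[b /andP[Hb Hab]]].
by move/forallP: Hc => /(_ a); rewrite Ha => /forallP /(_ b); rewrite Hb (negbTE Hab).
Qed.

End Graph.

Section Group.
Variables (gT : finGroupType) (G : {group gT}).
Local Notation E := (@coprime_rel gT).
Local Notation nbG := (nb G E).

Lemma E_sym a b : E a b = E b a.
Proof. by rewrite /coprime_rel /= eq_sym coprime_sym. Qed.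

Lemma E_irr z : ~~ E z z.
Proof. by rewrite /coprime_rel /= eqxx. Qed.

Lemma E_1 a : a != 1%g -> E 1%g a.
Proof. by move=> Ha; rewrite /coprime_rel /= eq_sym Ha order1 coprime1n. Qed.

Lemma nb_eq g : g != 1%g -> nbG g = [set h in G | coprime #[g]%g #[h]%g].
Proof.
move=> Hg; apply/setP=> h; rewrite !inE /coprime_rel /=.
case: (eqVneq g h) => [<-|] //=.
by rewrite /coprime gcdnn order_eq1 (negbTE Hg) andbF.
Qed.

Lemma connected_G : is_connected_graph G E.
Proof.
have H1 : forall a, a \in G -> connected_in E G 1%g a /\ connected_in E G a 1%g.
  move=> a Ha; case: (eqVneq a 1%g) => [->|Ha1]; first by split; exact: connect0.
  split; apply: connect1; rewrite /= Ha group1 /=; first exact: E_1.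
  by rewrite E_sym E_1.
apply/forallP=> a; apply/implyP=> Ha; apply/forallP=> b; apply/implyP=> Hb.
have [_ Ha'] := H1 a Ha; have [Hb' _] := H1 b Hb; exact: connect_trans Ha' Hb'.
Qed.

Lemma pgroup_mc p : prime p -> (p.-group G)%g -> minimally_connected G E.
Proof.
move=> Hp HG; split; first exact: connected_G.
have Hdv : forall c, c \in G -> c != 1%g -> p %| #[c]%g.
  move=> c Hc Hc1; have [k Hk] := p_natP (mem_p_elt HG Hc).
  rewrite Hk; case: k Hk => [|k] Hk; first by move: Hc1; rewrite -order_eq1 Hk.
  by rewrite expnS dvdn_mulr.
have Hnc : forall a b, a \in G -> b \in G -> a != 1%g -> b != 1%g -> ~~ coprime #[a]%g #[b]%g.
  move=> a b Ha Hb Ha1 Hb1.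
  apply/negP => Hcop; have := coprime_dvdl (Hdv a Ha Ha1) Hcop.
  by move/(coprime_dvdr (Hdv b Hb Hb1)); rewrite prime_coprime // dvdnn.
move=> a b Ha Hb Hab Eab.
have [z [Hz Hz1 Hcase]] : exists z, [/\ z \in G, z != 1%g &
    ((a == 1%g) && (b == z)) || ((a == z) && (b == 1%g))].
  case: (eqVneq a 1%g) => [Ha1|Ha1].
    exists b; split=> //; last by rewrite Ha1 eqxx.
    by rewrite -Ha1 eq_sym.
  exists a; split=> //; rewrite eqxx /=.
  apply/negPn/negP => Hb1; move: Eab; rewrite /coprime_rel /=.
  by rewrite (negbTE (Hnc a b Ha Hb Ha1 Hb1)) andbF.
have Hk1 : kappa G E = 1.
  apply/eqP; rewrite eqn_leq; apply/andP; split; last first.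
    apply: kappa_ge1; first exact: connected_G.
    have Hs : [set 1%g; z] \subset G by rewrite subUset !sub1set group1 Hz.
    by apply: leq_trans (subset_leq_card Hs); rewrite cards2 eq_sym Hz1.
  apply: leq_trans (kappa_le_deg Hz (E_irr z)) _.
  rewrite -(cards1 (1%g : gT)); apply: subset_leq_card; apply/subsetP=> h.
  rewrite !inE => /andP[Hh Ezh]; apply/negPn/negP => Hh1.
  by move: Ezh; rewrite /coprime_rel /= (negbTE (Hnc z h Hz Hh Hz1 Hh1)) andbF.
rewrite Hk1 /=; apply/eqP; rewrite -leqn0.
apply: leq_trans (kappa_le (S := set0) _) _; last by rewrite cards0.
rewrite /vertex_cut sub0set setD0 /=; apply/orP; left.
have Hiso : forall v, ~~ [rel u w | [&& u \in G, w \in G & del_edge E a b u w]] z v.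
  move=> v; apply/negP => /and3P[_ Hv]; rewrite /del_edge /=.
  case: (eqVneq v 1%g) => [->|Hv1].
    by case/orP: Hcase => /andP[/eqP-> /eqP->]; rewrite !eqxx /= ?orbT andbF.
  by rewrite /coprime_rel /= (negbTE (Hnc z v Hz Hv Hz1 Hv1)) andbF.
apply/existsP; exists z; rewrite Hz /=; apply/existsP; exists 1%g; rewrite group1 /=.
apply/negP => /(connect_isolated Hiso) H; by rewrite H eqxx in Hz1.
Qed.

Lemma mc_deg : minimally_connected G E -> forall z w, z \in G -> z != 1%g ->
  w \in G -> #|nbG z| <= #|nbG w|.
Proof.
move=> [Hc Hmc] z w Hz Hz1 Hw.
have HG2 : 1 < #|G|.
  have Hs : [set 1%g; z] \subset G by rewrite subUset !sub1set group1 Hz.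
  by apply: leq_trans (subset_leq_card Hs); rewrite cards2 eq_sym Hz1.
have Hk1 := kappa_ge1 Hc HG2.
have Hkw := kappa_le_deg Hw (E_irr w).
suff : #|nbG z| <= kappa G E by move/leq_trans; apply.
have Hdel := Hmc 1%g z (group1 G) Hz ltac:(by rewrite eq_sym) (E_1 Hz1).
have Hlt : #|nbG 1%g| < #|G|.
  apply: proper_card; apply/properP; split.
    by apply/subsetP=> h; rewrite inE => /andP[].
  by exists 1%g; rewrite ?group1 // inE (negbTE (E_irr 1%g)) andbF.
have Hk1le := kappa_le_deg (group1 G) (E_irr 1%g).
case: (kappa_cases G (del_edge E 1%g z)) => [HV|[S HS HSk]].
  rewrite Hdel in HV; have := leq_ltn_trans Hk1le Hlt; rewrite -HV.
  by rewrite ltnNge leq_subr.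
have HnS : ~~ vertex_cut G E S.
  apply/negP => /kappa_le; rewrite -HSk Hdel; lia.
have := del_cut E_sym (E_irr z) (fun a _ => @E_1 a) (group1 G) _ HS HnS.
rewrite -HSk Hdel; move=> H; apply: leq_trans (H _) _; first by rewrite eq_sym.
lia.
Qed.

Section Deg.
Hypothesis Hdeg : forall z w, z \in G -> z != 1%g -> w \in G -> #|nbG z| <= #|nbG w|.

Lemma no_two_primes g r s : g \in G -> prime r -> prime s -> r != s ->
  r %| #[g]%g -> s %| #[g]%g -> False.
Proof.
move=> Hg Hr Hs Hrs Hrg Hsg.
have [u Hu Hur] := Cauchy (G := <[g]>%G) Hr Hrg.
have [v Hv Hvs] := Cauchy (G := <[g]>%G) Hs Hsg.
have HgG : <[g]>%g \subset G by rewrite cycle_subG.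
have HuG := subsetP HgG u Hu; have HvG := subsetP HgG v Hv.
have Hu1 : u != 1%g by rewrite -order_eq1 Hur; case: r Hr {Hrs Hrg Hur Hu}=> [|[|]].
have Hg1 : g != 1%g.
  apply/negP=> /eqP Hg1; move: Hrg; rewrite Hg1 order1 dvdn1 => /eqP Hr1.
  by rewrite Hr1 in Hr.
have := Hdeg HuG Hu1 Hg; rewrite leqNgt => /negP; apply.
apply: proper_card; apply/properP; split.
  rewrite (nb_eq Hg1) (nb_eq Hu1); apply/subsetP=> h; rewrite !inE => /andP[Hh Hc].
  by rewrite Hh Hur /=; exact: coprime_dvdl Hrg Hc.
exists v.
  by rewrite (nb_eq Hu1) inE HvG Hur Hvs prime_coprime // dvdn_prime2.
by rewrite (nb_eq Hg1) inE Hvs coprime_sym prime_coprime // Hsg andbF.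
Qed.

Lemma two_primes_false p q x y : prime p -> prime q -> p != q ->
  x \in G -> #[x]%g = p -> y \in G -> #[y]%g = q -> False.
Proof.
move=> Hp Hq Hpq HxG Hx HyG Hy.
have Hx1 : x != 1%g by rewrite -order_eq1 Hx; case: p Hp {Hpq Hx} => [|[|]].
have Hy1 : y != 1%g by rewrite -order_eq1 Hy; case: q Hq {Hpq Hy} => [|[|]].
set A := [set h in G | coprime p #[h]%g].
set B := [set h in G | coprime q #[h]%g].
have HAB : #|A| = #|B|.
  have E1 : nbG x = A by rewrite nb_eq // Hx.
  have E2 : nbG y = B by rewrite nb_eq // Hy.
  apply/eqP; rewrite eqn_leq -E1 -E2 !Hdeg //.
have Hord : forall h, commute x h -> coprime p #[h]%g -> #[x * h]%g = p * #[h]%g.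
  by move=> h Hc Hcp; rewrite orderM // Hx.
have HxC : <[x]>%g \subset G by rewrite cycle_subG.
have Hpx : (p.-group <[x]>%g)%g.
  by have : p.-nat #[x]%g by rewrite Hx pnat_id.
have Hacts : forall r, ([acts <[x]>, on [set h in G | coprime r #[h]] | 'J])%g.
  move=> r; apply/actsP => a Ha h; rewrite !inE /= orderJ groupJr //.
  exact: subsetP HxC a Ha.
have HF : forall S, 'Fix_(S | 'J)(<[x]>)%g = S :&: 'C[x]%g.
  by move=> S; rewrite afixJ cent_cycle.
have HA : #|A| = 1 %[mod p].
  rewrite (pgroup_fix_mod Hpx (Hacts p)) HF.
  suff -> : A :&: 'C[x]%g = [set 1%g] by rewrite cards1.
  apply/setP=> h; rewrite in_setI in_set1 [h \in A]inE; apply/idP/idP; last first.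
    by move/eqP->; rewrite group1 order1 coprimen1 group1.
  case/andP=> /andP[Hh Hcp] /cent1P Hcent; apply/negPn/negP => Hh1.
  have H1h : 1 < #[h]%g by rewrite ltn_neqAle eq_sym order_eq1 Hh1 order_gt0.
  have Hr := pdiv_prime H1h; have Hrh := pdiv_dvd #[h]%g.
  have Hpr : p != pdiv #[h]%g.
    by apply/negP=> /eqP Hpr; move: Hcp; rewrite prime_coprime // Hpr Hrh.
  apply: (@no_two_primes (x * h)%g p (pdiv #[h]%g)) => //; first exact: groupM.
    by rewrite Hord ?dvdn_mulr // (esym Hcent).
  by rewrite Hord ?dvdn_mull // (esym Hcent).
have HB : #|B| = 0 %[mod p].
  rewrite (pgroup_fix_mod Hpx (Hacts q)) HF mod0n.
  suff -> : B :&: 'C[x]%g = 'C_G[x]%g.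
    apply/eqP; have : #[x]%g %| #|'C_G[x]%G| := cardSg (subcent1_cycle_sub HxG).
    by rewrite Hx.
  apply/setP=> h; rewrite !in_setI [h \in B]inE.
  case Hh: (h \in G); case Hc: (h \in 'C[x]%g); rewrite ?andbF //=.
  rewrite ?andbT prime_coprime //; apply/negP => Hqh.
  move/cent1P: Hc => Hcent.
  case: (boolP (p %| #[h]%g)) => Hph.
    exact: (@no_two_primes h p q Hh Hp Hq Hpq Hph Hqh).
  have Hcp : coprime p #[h]%g by rewrite prime_coprime.
  apply: (@no_two_primes (x * h)%g p q) => //; first exact: groupM.
    by rewrite Hord ?dvdn_mulr // (esym Hcent).
  by rewrite Hord ?dvdn_mull // (esym Hcent).
by move: HA; rewrite HAB HB mod0n (modn_small (prime_gt1 Hp)).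
Qed.

End Deg.

End Group.

Theorem mainTheorem13 (gT : finGroupType) (G : {group gT}) :
  minimally_connected G (@coprime_rel gT) <->
  exists p : nat, prime p /\ (p.-group G)%g.
Proof.
split; last by case=> p [Hp Hpg]; exact: pgroup_mc Hp Hpg.
move=> Hmc; have Hdeg := mc_deg Hmc.
case: (leqP #|G| 1) => HG.
  exists 2; split=> //; rewrite /pgroup.
  have -> : #|G| = 1 by apply/eqP; rewrite eqn_leq HG cardG_gt0.
  by [].
have Hp := pdiv_prime HG; set p := pdiv #|G| in Hp.
case: (boolP (p.-group G)%g) => Hpg; first by exists p.
exfalso; move: Hpg; rewrite /pgroup /pnat cardG_gt0 /= -has_predC => /hasP [q Hq Hqp].
rewrite mem_primes in Hq; case/and3P: Hq => Hqpr _ Hqd.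
have Hpq : p != q by move: Hqp; rewrite /= eq_sym.
have [x Hx Hxo] := Cauchy Hp (pdiv_dvd #|G|).
have [y Hy Hyo] := Cauchy Hqpr Hqd.
exact: (two_primes_false Hdeg Hp Hqpr Hpq Hx Hxo Hy Hyo).
Qed.
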